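(* Let $m\geq 2$ and $n\geq 2$ be integers, let $T_m$ be a tree of order $m$ and $K_n$ the complete graph of order $n$. Then $$\max\{rvc(T_m),\,n+2\}\leq rvcl(T_m\diamond K_n)\leq 2m+n-2.$$
   Context: All graphs are finite, simple, connected and undirected; $d$ denotes graph distance. A rainbow vertex $k$-coloring of $G$ is a map $c:V(G)\to\{1,\dots,k\}$ such that every two vertices are joined by a path whose internal vertices all receive distinct colors; $rvc(G)$ is the least $k$ for which $G$ has one. For such $c$ let $R_i=c^{-1}(i)$; the rainbow code of $v$ is $(d(v,R_1),\dots,d(v,R_k))$ with $d(v,R_i)=\min_{x\in R_i}d(v,x)$. A locating rainbow $k$-coloring is a rainbow vertex $k$-coloring in which distinct vertices have distinct rainbow codes; $rvcl(G)$ is the least $k$ for which one exists. For graphs $G_m$ (order $m$) and $H_n$ (order $n$) on disjoint vertex sets, the edge corona $G_m\diamond H_n$ is obtained from one copy of $G_m$ and $|E(G_m)|$ vertex-disjoint copies of $H_n$, one per edge of $G_m$, by joining both end vertices of the $j$-th edge of $G_m$ to every vertex of the $j$-th copy of $H_n$. *)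

(* Defs.v *)
From mathcomp Require Import all_boot.
Set Implicit Arguments. Unset Strict Implicit. Unset Printing Implicit Defensive.

Section Graphs.
Variable V : finType.

Definition simple_graph (e : rel V) : Prop := symmetric e /\ irreflexive e.

Definition connected (e : rel V) : Prop := forall u v : V, connect e u v.

Definition acyclic (e : rel V) : Prop :=
  forall c : seq V, uniq c -> 2 < size c -> ~~ cycle e c.

Definition is_tree (e : rel V) : Prop := connected e /\ acyclic e.

Definition walk_len (e : rel V) (k : nat) (u v : V) : bool :=
  [exists t : k.-tuple V, path e u t && (last u t == v)].

(* graph distance d(u,v): least length of a u-v walk (for connected graphs a
   shortest walk has length < #|V|; default #|V| is never attained then) *)
Definition dist (e : rel V) (u v : V) : nat :=
  \big[minn/#|V|]_(k < #|V| | walk_len e k u v) k.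

(* d(v,A) = min_{x in A} d(v,x)  (constant #|V| if A is empty) *)
Definition setdist (e : rel V) (v : V) (A : {set V}) : nat :=
  \big[minn/#|V|]_(x in A) dist e v x.

(* p (the vertices after u) is a u-v path whose internal vertices have
   pairwise distinct colours under c *)
Definition rainbow_path (k : nat) (e : rel V) (c : V -> 'I_k) (u v : V) (p : seq V) : bool :=
  [&& path e u p, last u p == v, uniq (u :: p) & uniq (map c (behead (belast u p)))].

(* rainbow vertex colouring: every two vertices joined by a rainbow path
   (a path has < #|V| edges, so the bounded search is exhaustive) *)
Definition rainbow_coloring (k : nat) (e : rel V) (c : V -> 'I_k) : bool :=
  [forall u, forall v, [exists l : 'I_#|V|, [exists t : l.-tuple V, rainbow_path e c u v t]]].

Definition color_class (k : nat) (c : V -> 'I_k) (i : 'I_k) : {set V} :=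
  [set x | c x == i].

Definition locating (k : nat) (e : rel V) (c : V -> 'I_k) : bool :=
  [forall u, forall v, (u != v) ==>
     [exists i, setdist e u (color_class c i) != setdist e v (color_class c i)]].

Definition has_rvc (e : rel V) (k : nat) : bool :=
  [exists c : {ffun V -> 'I_k}, rainbow_coloring e c].

Definition has_rvcl (e : rel V) (k : nat) : bool :=
  [exists c : {ffun V -> 'I_k}, rainbow_coloring e c && locating e c].

(* least k (searched in 0..#|V|, which suffices for connected graphs since an
   injective colouring works) *)
Definition rvc (e : rel V) : nat := find (has_rvc e) (iota 0 #|V|.+1).
Definition rvcl (e : rel V) : nat := find (has_rvcl e) (iota 0 #|V|.+1).

End Graphs.

Definition complete_rel (n : nat) : rel 'I_n := fun i j => i != j.
Arguments complete_rel n : clear implicits.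

Definition is_edge (V : finType) (e : rel V) (A : {set V}) : bool :=
  [exists x, [exists y, e x y && (A == [set x; y])]].

Definition edge_type (V : finType) (e : rel V) := {A : {set V} | is_edge e A}.

(* edge corona G <> H : copy of G plus one copy of H per edge of G, both
   end vertices of the edge joined to all vertices of its copy *)
Definition corona_rel (V W : finType) (e : rel V) (f : rel W) :
  rel (V + (edge_type e * W))%type :=
  fun a b => match a, b with
  | inl x, inl y => e x y
  | inr (A, w), inr (B, w') => (A == B) && f w w'
  | inl x, inr (A, _) => x \in val A
  | inr (A, _), inl x => x \in val A
  end.
Arguments corona_rel {V W} e f.

(* Main.v *)
Require Import Defs.
From mathcomp Require Import all_boot.
From mathcomp Require Import zify.
Set Implicit Arguments. Unset Strict Implicit. Unset Printing Implicit Defensive.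


Lemma bigmin_le (I : eqType) (r : seq I) (P : pred I) (F : I -> nat) d i :
  i \in r -> P i -> \big[minn/d]_(j <- r | P j) F j <= F i.
Proof.
elim: r => [|x r IH] //= ; rewrite in_cons big_cons.
case/orP=> [/eqP<- -> | Hi Pi]; first by rewrite geq_minl.
case: (P x); last exact: IH.
by rewrite geq_min IH ?orbT.
Qed.

Lemma bigmin_ge (I : Type) (r : seq I) (P : pred I) (F : I -> nat) d k :
  k <= d -> (forall i, P i -> k <= F i) -> k <= \big[minn/d]_(j <- r | P j) F j.
Proof.
move=> kd kF; apply: (big_ind (fun x => k <= x)) => // x y kx ky.
by rewrite leq_min kx ky.
Qed.

Section Dist.
Variable V : finType.
Variable r : rel V.

Lemma walk0 u v : walk_len r 0 u v = (u == v).
Proof.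
apply/existsP/idP => [[t]|/eqP->].
  by rewrite tuple0.
by exists [tuple]; rewrite /= eqxx.
Qed.

Lemma walk1 u v : walk_len r 1 u v = r u v.
Proof.
apply/existsP/idP => [[t]|H].
  by case: t => [[|x [|? ?]] //= _]; rewrite andbT => /andP[? /eqP<-].
by exists [tuple v]; rewrite /= H eqxx.
Qed.

Lemma card_gt0V (u : V) : 0 < #|V|.
Proof. by apply/card_gt0P; exists u. Qed.

Lemma card_gt1V (u v : V) : u != v -> 1 < #|V|.
Proof.
move=> uv; apply: leq_trans (max_card (mem [set u; v])).
by rewrite cards2 uv.
Qed.

Lemma dist_le u v k : k < #|V| -> walk_len r k u v -> dist r u v <= k.
Proof.
move=> kV w; rewrite /dist.
exact: (@bigmin_le _ _ _ (fun j : 'I_#|V| => nat_of_ord j) _ (Ordinal kV) (mem_index_enum _) w).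
Qed.

Lemma dist_ge u v j : j <= #|V| -> (forall k, walk_len r k u v -> j <= k) -> j <= dist r u v.
Proof. by move=> jV H; apply: bigmin_ge => // i; apply: H. Qed.

Lemma dist_uu u : dist r u u = 0.
Proof. by apply/eqP; rewrite -leqn0; apply: dist_le; rewrite ?card_gt0V ?walk0. Qed.

Lemma dist_ge1 u v : u != v -> 1 <= dist r u v.
Proof.
move=> uv; apply: dist_ge; first exact: card_gt0V u.
by case=> //; rewrite walk0 (negbTE uv).
Qed.

Lemma dist_le1 u v : u != v -> r u v -> dist r u v <= 1.
Proof. by move=> uv ruv; apply: dist_le; rewrite ?walk1 // (card_gt1V uv). Qed.

Lemma dist_ge2 u v : u != v -> ~~ r u v -> 2 <= dist r u v.
Proof.
move=> uv ruv; apply: dist_ge; first exact: card_gt1V uv.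
by case=> [|[|k]] //; rewrite ?walk0 ?walk1 ?(negbTE uv) ?(negbTE ruv).
Qed.

Lemma setdist_le v (A : {set V}) x : x \in A -> setdist r v A <= dist r v x.
Proof. by move=> xA; apply: bigmin_le; rewrite ?mem_index_enum. Qed.

Lemma setdist_ge v (A : {set V}) j : j <= #|V| -> (forall x, x \in A -> j <= dist r v x) -> j <= setdist r v A.
Proof. by move=> jV H; apply: bigmin_ge. Qed.

End Dist.


Section Auto.
Variable V : finType.
Variable r : rel V.
Variable s : V -> V.
Hypothesis sr : forall a b, r (s a) (s b) = r a b.

Lemma path_auto x p : path r (s x) (map s p) = path r x p.
Proof. by elim: p x => //= y p IH x; rewrite sr IH. Qed.

Lemma walk_auto k u v : walk_len r k u v -> walk_len r k (s u) (s v).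
Proof.
case/existsP => t /andP[p /eqP l]; apply/existsP; exists (map_tuple s t).
by rewrite /= path_auto p last_map l eqxx.
Qed.

Hypothesis sinv : involutive s.

Lemma dist_auto u v : dist r (s u) (s v) = dist r u v.
Proof.
rewrite /dist; apply: eq_bigl => k; apply/idP/idP => [H|]; last exact: walk_auto.
by rewrite -(sinv u) -(sinv v); apply: walk_auto.
Qed.
End Auto.

Section Corona.
Variables (T : finType) (e : rel T) (n : nat).
Hypothesis esym : symmetric e.
Hypothesis eirr : irreflexive e.

Definition Vc : finType := (T + (edge_type e * 'I_n))%type.
Definition rc : rel Vc := corona_rel e (complete_rel n).

Lemma rc_sym : symmetric rc.
Proof.
by case=> [x|[A w]] [y|[B w']] //=; rewrite /complete_rel ?esym // eq_sym [w' == w]eq_sym.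
Qed.

Lemma rc_irr : irreflexive rc.
Proof. by case=> [x|[A w]] /=; rewrite ?eirr // /complete_rel !eqxx. Qed.

Lemma edgeP (A : edge_type e) : exists x y, e x y /\ val A = [set x; y].
Proof. by case: A => A /= /existsP[x /existsP[y /andP[exy /eqP->]]]; exists x, y. Qed.

Lemma edge_adj (A : edge_type e) x z : x \in val A -> z \in val A -> x != z -> e x z.
Proof.
have [p [q [epq ->]]] := edgeP A.
rewrite !inE => /orP[]/eqP-> /orP[]/eqP->; rewrite ?eqxx // => _.
by rewrite esym.
Qed.

Lemma edge_elem (A : edge_type e) : exists a, a \in val A.
Proof. by have [p [q [_ ->]]] := edgeP A; exists p; rewrite !inE eqxx. Qed.

Lemma edge_card (A : edge_type e) : #|val A| = 2.
Proof.
have [p [q [epq ->]]] := edgeP A; rewrite cards2.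
by case: eqP epq => // ->; rewrite eirr.
Qed.

Lemma edge_diff (A B : edge_type e) : A != B -> exists2 x, x \in val A & x \notin val B.
Proof.
move=> AB; apply/subsetPn; apply: contra AB => sub.
apply/eqP; apply: val_inj; apply/eqP; rewrite eqEcard sub !edge_card //.
Qed.

End Corona.
Arguments rc {T} e n.
Arguments Vc {T} e n.


Section Upper.
Variables (T : finType) (e : rel T) (n : nat).
Hypothesis esym : symmetric e.
Hypothesis eirr : irreflexive e.
Hypothesis econn : connected e.

Definition col (v : Vc e n) : 'I_(#|T| + n) :=
  match v with inl x => lshift n (enum_rank x) | inr (A, w) => rshift #|T| w end.

Lemma col_inl x y : col y = col (inl x) -> y = inl x.
Proof.
case: y => [y|[B w]] /= H.
  by move/lshift_inj/enum_rank_inj: H => ->.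
have := congr1 val H; rewrite /= => H'.
by have := ltn_ord (enum_rank x); rewrite -H' ltnNge leq_addr.
Qed.

Lemma col_inr y A w : col y = col (inr (A, w)) -> exists B, y = inr (B, w).
Proof.
case: y => [y|[B w']] /= H.
  have := congr1 val H; rewrite /= => H'.
  by have := ltn_ord (enum_rank y); rewrite H' ltnNge leq_addr.
by move/rshift_inj: H => ->; exists B.
Qed.

Notation sd u i := (setdist (rc e n) u (color_class col i)).

Lemma loc_inl x (v : Vc e n) : inl x != v -> exists i, sd (inl x) i != sd v i.
Proof.
move=> xv; exists (col (inl x)).
have -> : sd (inl x) (col (inl x)) = 0.
  apply/eqP; rewrite -leqn0; rewrite -(dist_uu (rc e n) (inl x)).
  by apply: setdist_le; rewrite inE.
rewrite eq_sym -lt0n; apply: setdist_ge; first exact: card_gt0V v.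
move=> y; rewrite inE => /eqP/col_inl ->; apply: dist_ge1; by rewrite eq_sym.
Qed.

Lemma loc_same (A : edge_type e) (w w' : 'I_n) : w != w' -> exists i, sd (inr (A, w)) i != sd (inr (A, w')) i.
Proof.
move=> ww; exists (col (inr (A, w))).
have -> : sd (inr (A, w)) (col (inr (A, w))) = 0.
  apply/eqP; rewrite -leqn0; rewrite -(dist_uu (rc e n) (inr (A, w))).
  by apply: setdist_le; rewrite inE.
rewrite eq_sym -lt0n; apply: setdist_ge; first exact: card_gt0V (inr (A, w) : Vc e n).
move=> y; rewrite inE => /eqP/col_inr [B ->]; apply: dist_ge1.
apply/eqP => -[_ E]; by rewrite E eqxx in ww.
Qed.

Lemma loc_diff (A B : edge_type e) (w w' : 'I_n) x : x \in val A -> x \notin val B ->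
  exists i, sd (inr (A, w)) i != sd (inr (B, w')) i.
Proof.
move=> xA xB; exists (col (inl x)).
have H1 : sd (inr (A, w)) (col (inl x)) <= 1.
  apply: leq_trans (setdist_le _ _ (x := inl x) _) _; first by rewrite inE.
  by apply: dist_le1.
have H2 : 2 <= sd (inr (B, w')) (col (inl x)).
  apply: setdist_ge; first by apply: (card_gt1V (u := inl x) (v := inr (B, w'))).
  move=> y; rewrite inE => /eqP/col_inl ->; by apply: dist_ge2.
apply/eqP => E; by rewrite -E ltnNge H1 in H2.
Qed.

Lemma col_locating : locating (rc e n) col.
Proof.
apply/forallP => u; apply/forallP => v; apply/implyP => uv; apply/existsP.
have flip : forall a b, (exists i, sd a i != sd b i) -> exists i, sd b i != sd a i.
  by move=> a b [i H]; exists i; rewrite eq_sym.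
case: u uv => [x|[A w]] uv; first exact: loc_inl.
case: v uv => [y|[B w']] uv; first by apply: flip; apply: loc_inl; rewrite eq_sym.
case: (eqVneq A B) => [AB|AB].
  subst B; apply: loc_same; apply: contra uv => /eqP->; by [].
have [x xA xB] := edge_diff eirr AB; first exact: loc_diff xA xB.
Qed.

End Upper.


Lemma uniq_internal (V : eqType) (u : V) p : uniq (u :: p) -> uniq (behead (belast u p)).
Proof.
rewrite lastI rcons_uniq => /andP[_]; case: (belast u p) => //= ? ? /andP[].
by [].
Qed.

Lemma tpath (T : finType) (e : rel T) : connected e -> forall a b : T,
  exists p, [/\ path e a p, last a p = b & uniq (a :: p)].
Proof.
move=> con a b; case/connectP: (con a b) => p Hp ->.
by case: (shortenP Hp) => p' Hp' Hu _; exists p'.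
Qed.

Section Rainbow.
Variables (T : finType) (e : rel T) (n : nat).
Hypothesis esym : symmetric e.
Hypothesis eirr : irreflexive e.
Hypothesis econn : connected e.

Definition isl (v : Vc e n) := if v is inl _ then true else false.

Lemma rb_of_seq (u v : Vc e n) p : path (rc e n) u p -> last u p = v -> uniq (u :: p) ->
  all isl (behead (belast u p)) ->
  [exists l : 'I_#|Vc e n|, [exists t : l.-tuple (Vc e n), rainbow_path (rc e n) (@col T e n) u v t]].
Proof.
move=> Hp Hl Hu Hi.
have Hs : size p < #|Vc e n|.
  by have := max_card (mem (u :: p)); rewrite (card_uniqP Hu).
apply/existsP; exists (Ordinal Hs); apply/existsP; exists (in_tuple p).
apply/and4P; split => //; first by rewrite Hl.
rewrite map_inj_in_uniq; first exact: uniq_internal.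
move=> a b Ha Hb; have := allP Hi a Ha; have := allP Hi b Hb.
case: a {Ha} => [x|//]; case: b {Hb} => [y|//] _ _ /=.
by move/lshift_inj/enum_rank_inj ->.
Qed.

Lemma inl_notin_map (B : edge_type e) (w : 'I_n) (s : seq T) : (inr (B, w) : Vc e n) \notin map inl s.
Proof. by apply/mapP => -[]. Qed.

Lemma path_inl (a : T) p : path (rc e n) (inl a) (map inl p) = path e a p.
Proof. by elim: p a => //= b p IH a; rewrite IH. Qed.

Lemma all_isl s : all isl (map inl s : seq (Vc e n)).
Proof. by elim: s. Qed.

Lemma col_rainbow : rainbow_coloring (rc e n) (@col T e n).
Proof.
apply/forallP => u; apply/forallP => v.
case: (eqVneq u v) => [<-|uv].
  by apply: (@rb_of_seq u u [::]).
case: u uv => [a|[A w]] uv.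
  case: v uv => [b|[B w']] uv.
    have [p [Hp Hl Hu]] := tpath econn a b.
    apply: (@rb_of_seq _ _ (map inl p)).
    - by rewrite path_inl.
    - by rewrite last_map Hl.
    - by rewrite -map_cons (map_inj_uniq (@inl_inj _ _)).
    - by rewrite belast_map; case: (belast a p) => //= ? ?; apply: all_isl.
  have [b bB] := edge_elem B.
  have [p [Hp Hl Hu]] := tpath econn a b.
  apply: (@rb_of_seq _ _ (rcons (map inl p) (inr (B, w')))).
  - by rewrite rcons_path path_inl Hp last_map Hl /= bB.
  - by rewrite last_rcons.
  - rewrite -rcons_cons rcons_uniq -map_cons inl_notin_map.
    by rewrite (map_inj_uniq (@inl_inj _ _)).
  - by rewrite belast_rcons /= all_isl.
have [a aA] := edge_elem A.
case: v uv => [b|[B w']] uv.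
  have [p [Hp Hl Hu]] := tpath econn a b.
  apply: (@rb_of_seq _ _ (map inl (a :: p))).
  - by rewrite /= aA path_inl Hp.
  - by rewrite /= last_map Hl.
  - by rewrite cons_uniq inl_notin_map (map_inj_uniq (@inl_inj _ _)).
  - by rewrite /= belast_map all_isl.
have [b bB] := edge_elem B.
have [p [Hp Hl Hu]] := tpath econn a b.
apply: (@rb_of_seq _ _ (rcons (map inl (a :: p)) (inr (B, w')))).
- by rewrite rcons_path /= aA path_inl Hp last_map Hl /= bB.
- by rewrite last_rcons.
- have vu : (inr (B, w') : Vc e n) != inr (A, w) by rewrite eq_sym.
  rewrite -rcons_cons rcons_uniq in_cons negb_or vu.
  have := inl_notin_map B w' (a :: p); have := inl_notin_map A w (a :: p).
  rewrite /= => -> -> /=.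
  by move: Hu; rewrite -(map_inj_uniq (@inl_inj T (edge_type e * 'I_n)%type)).
- by rewrite belast_rcons /= all_isl.
Qed.

End Rainbow.


Section Leaf.
Variables (T : finType) (e : rel T).
Hypothesis esym : symmetric e.
Hypothesis eirr : irreflexive e.
Hypothesis eacyc : acyclic e.
Variables z0 y0 : T.
Hypothesis ez0 : e z0 y0.

Definition upath (s : seq T) : bool :=
  uniq s && (if s is x :: s' then path e x s' else true).

Definition Pk (k : nat) : bool := [exists t : k.-tuple T, upath t].

Lemma Pk_ub k : Pk k -> k <= #|T|.
Proof.
case/existsP => t /andP[u _]; rewrite -(size_tuple t) -(card_uniqP u).
exact: max_card.
Qed.

Lemma P2 : Pk 2.
Proof.
have zy : z0 != y0 by apply: contraTneq ez0 => ->; rewrite eirr.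
apply/existsP; exists [tuple z0; y0].
by rewrite /upath /= ez0 !inE zy.
Qed.

Lemma Pk_ex : exists k, Pk k.
Proof. by exists 2; apply: P2. Qed.

Lemma no_back z s w : uniq (z :: s) -> path e z s -> w \in s -> w != head z s -> e z w -> False.
Proof.
move=> u ps ws; move: u ps; case/path.splitP: ws => p1 p2 u ps wh ezw.
have H1 : uniq (z :: rcons p1 w).
  by move: u; rewrite -cat_cons cat_uniq => /andP[].
have H2 : 2 < size (z :: rcons p1 w).
  by case: p1 {u ps H1} wh => [|a p1] /=; rewrite ?eqxx // size_rcons.
have H3 : cycle e (z :: rcons p1 w).
  rewrite /= rcons_path last_rcons (esym w z) ezw andbT.
  by move: ps; rewrite cat_path => /andP[].
by have := eacyc H1 H2; rewrite H3.
Qed.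

Lemma leaf_exists : exists x y, e x y /\ forall w, e x w -> w = y.
Proof.
case: (ex_maxnP Pk_ex Pk_ub) => k /existsP[t Ht] kmax.
have k2 : 2 <= k by apply: kmax; apply: P2.
case: t Ht => [[|z [|y p]] /= /eqP sz] Ht; first by rewrite -sz in k2.
  by rewrite -sz in k2.
move: Ht; rewrite /upath /= => /andP[/andP[zn yp] /andP[ezy pp]].
exists z, y; split => // w ezw; apply/eqP/negPn/negP => wy.
have wz : w != z by apply: contraTneq ezw => ->; rewrite eirr.
case: (boolP (w \in y :: p)) => wp.
  apply: (@no_back z (y :: p) w) => //; first by rewrite /= zn yp.
  by rewrite /= ezy.
have : Pk k.+1.
  apply/existsP.
  have sz' : size [:: w, z, y & p] == k.+1 by rewrite /= sz.
  exists (Tuple sz'); rewrite /upath /= (esym w z) ezw ezy pp /=.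
  by rewrite /= zn yp in_cons negb_or wz (negbTE wp).
by move/kmax; rewrite ltnn.
Qed.
End Leaf.


Section Twin.
Variable V : finType.
Variable r : rel V.
Hypothesis rs : symmetric r.
Hypothesis ri : irreflexive r.

Definition sw (u v a : V) := if a == u then v else if a == v then u else a.

Lemma sw_inv u v : involutive (sw u v).
Proof.
move=> a; rewrite /sw.
case: (eqVneq a u) => [->|au]; first by case: (eqVneq v u) => [->|vu]; rewrite ?eqxx.
case: (eqVneq a v) => [->|av]; first by rewrite eqxx.
by rewrite (negbTE au) (negbTE av).
Qed.

Lemma sw_auto u v : (forall a, a != u -> a != v -> r u a = r v a) ->
  forall a b, r (sw u v a) (sw u v b) = r a b.
Proof.
move=> tw a b; rewrite /sw.
case: (eqVneq a u) => [->|au].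
  case: (eqVneq b u) => [->|bu]; first by rewrite !ri.
  case: (eqVneq b v) => [->|bv]; first by rewrite rs.
  by rewrite tw.
case: (eqVneq a v) => [->|av].
  case: (eqVneq b u) => [->|bu]; first by rewrite rs.
  case: (eqVneq b v) => [->|bv]; first by rewrite !ri.
  by rewrite tw.
case: (eqVneq b u) => [->|bu].
  by rewrite rs -tw // rs.
case: (eqVneq b v) => [->|bv] //.
by rewrite rs tw // rs.
Qed.

Variable k : nat.
Variable c : V -> 'I_k.
Hypothesis loc : locating r c.

Lemma twin_color u v : u != v -> (forall a, a != u -> a != v -> r u a = r v a) ->
  c u != c v.
Proof.
move=> uv tw; apply/negP => /eqP cuv.
have := forallP (forallP loc u) v; rewrite uv /= => /existsP[i].
case: (eqVneq (c u) i) => [ci|ci].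
  have H1 : setdist r u (color_class c i) = 0.
    apply/eqP; rewrite -leqn0 -(dist_uu r u); apply: setdist_le; by rewrite inE ci.
  have H2 : setdist r v (color_class c i) = 0.
    apply/eqP; rewrite -leqn0 -(dist_uu r v); apply: setdist_le; by rewrite inE -cuv ci.
  by rewrite H1 H2.
rewrite /setdist; under eq_bigr => z.
  rewrite inE => /eqP cz.
  have zu : z != u by apply: contra_neq ci => E; rewrite -cz E.
  have zv : z != v by apply: contra_neq ci => E; rewrite -cz E cuv.
  rewrite -(dist_auto (sw_auto tw) (sw_inv u v)).
  rewrite {1}/sw eqxx {1}/sw (negbTE zu) (negbTE zv).
  over.
by rewrite eqxx.
Qed.
End Twin.


Section Lower.
Variables (T : finType) (e : rel T) (n : nat).
Hypothesis esym : symmetric e.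
Hypothesis eirr : irreflexive e.
Variables x y : T.
Hypothesis exy : e x y.
Hypothesis leaf : forall w, e x w -> w = y.

Lemma xy_edge : is_edge e [set x; y].
Proof. by apply/existsP; exists x; apply/existsP; exists y; rewrite exy eqxx. Qed.

Definition E : edge_type e := exist (fun A => is_edge e A) [set x; y] xy_edge.

Definition f (o : option 'I_n) : Vc e n :=
  if o is Some w then inr (E, w) else inl x.

Lemma f_inj : injective f.
Proof. by case=> [w|] [w'|] //= [->]. Qed.

Definition Nc (a : Vc e n) : bool :=
  match a with inl b => (b == x) || (b == y) | inr (B, _) => B == E end.

Lemma xny : x != y.
Proof. by apply/eqP => E; move: exy; rewrite E eirr. Qed.

Lemma B_of_x (B : edge_type e) : (x \in val B) = (B == E).
Proof.
apply/idP/eqP => [xB|->]; last by rewrite /= !inE eqxx.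
apply: val_inj; have [p [q [epq EB]]] := edgeP B; rewrite EB /=.
move: xB; rewrite EB !inE => /orP[]/eqP xp.
  by subst p; rewrite (leaf epq).
by subst q; rewrite esym in epq; rewrite (leaf epq) setUC.
Qed.

Lemma twinS o (a : Vc e n) : rc e n (f o) a = Nc a && (a != f o).
Proof.
case: o => [w|]; case: a => [b|[B w']] /=.
- by rewrite !inE andbT.
- rewrite /complete_rel; case: (eqVneq B E) => [->|BE] /=; last first.
    by [].
  by rewrite (inj_eq (@inr_inj _ _)) xpair_eqE eqxx /= eq_sym.
- apply/idP/idP => [exb|/andP[/orP[]/eqP-> bx]].
  + by rewrite (leaf exb) eqxx orbT /= eq_sym xny.
  + by rewrite eqxx in bx.
  + exact: exy.
- by rewrite B_of_x andbT.
Qed.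

Lemma twin_f o o' a : a != f o -> a != f o' -> rc e n (f o) a = rc e n (f o') a.
Proof. by move=> h1 h2; rewrite !twinS h1 h2. Qed.

Lemma rc_ff o o' : f o != f o' -> rc e n (f o) (f o').
Proof. by move=> h; rewrite twinS eq_sym h andbT; case: o' {h} => [w|] /=; rewrite eqxx. Qed.

Lemma rc_fy o : rc e n (f o) (inl y).
Proof.
rewrite twinS /= eqxx orbT /=; case: o => [w|] //=.
by rewrite eq_sym xny.
Qed.

Variable k : nat.
Variable c : Vc e n -> 'I_k.
Hypothesis loc : locating (rc e n) c.

Lemma cf_inj : injective (c \o f).
Proof.
move=> o o' /= H; apply/eqP/negPn/negP => oo.
have fo : f o != f o' by apply: contra oo => /eqP/f_inj ->.
have := twin_color (@rc_sym _ _ n esym) (@rc_irr _ _ n eirr) loc fo.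
by rewrite H eqxx => /(_ (fun a h1 h2 => twin_f h1 h2)).
Qed.

Lemma lower_k : n.+2 <= k.
Proof.
have Hk : n.+1 <= k.
  by have := leq_card _ cf_inj; rewrite card_option !card_ord.
rewrite ltn_neqAle Hk andbT; apply/negP => /eqP kn.
have onto : forall i, exists o, c (f o) = i.
  have cr : #|'I_k| <= #|{: option 'I_n}| by rewrite card_option !card_ord kn.
  by move=> i; case/codomP: (inj_card_onto cf_inj cr i) => o ->; exists o.
have code : forall q : Vc e n, (forall o, q != f o -> rc e n q (f o)) ->
    forall i, setdist (rc e n) q (color_class c i) = (c q != i).
  move=> q adj i; case: (eqVneq (c q) i) => [ci|ci] /=.
    apply/eqP; rewrite -leqn0 -(dist_uu (rc e n) q); apply: setdist_le; by rewrite inE ci.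
  apply/eqP; rewrite eqn_leq; apply/andP; split.
    have [o co] := onto i.
    have qo : q != f o by apply: contra_neq ci => ->; rewrite co.
    apply: leq_trans (setdist_le _ _ (x := f o) _) _; first by rewrite inE co.
    by apply: dist_le1 => //; apply: adj.
  apply: setdist_ge; first exact: card_gt0V q.
  move=> z; rewrite inE => /eqP cz; apply: dist_ge1.
  by apply: contra_neq ci => ->.
have [o co] := onto (c (inl y)).
have yo : (inl y : Vc e n) != f o.
  by case: o {co} => [w|] //=; apply: contra_neq xny => -[->].
have := forallP (forallP loc (inl y)) (f o); rewrite yo /= => /existsP[i].
rewrite (code (inl y)) ?(code (f o)) ?co ?eqxx //.
  by move=> o' h; apply: rc_ff.
by move=> o' _; rewrite rc_sym ?rc_fy.
Qed.

End Lower.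


Section Proj.
Variables (T : finType) (e : rel T) (n : nat).
Hypothesis esym : symmetric e.
Hypothesis eirr : irreflexive e.

Definition getl (v : Vc e n) : option T := if v is inl x then Some x else None.
Definition proj (s : seq (Vc e n)) := pmap getl s.

Lemma getlK : ocancel getl inl.
Proof. by case. Qed.

Lemma proj_path : forall s (v0 : Vc e n) x, path (rc e n) v0 s ->
  (v0 = inl x \/ exists A w, v0 = inr (A, w) /\ x \in val A) ->
  inl x \notin s -> uniq s -> path e x (proj s).
Proof.
move=> s; elim: s => [//|v1 s IH] v0 x /= /andP[r01 ps] H0.
rewrite in_cons negb_or => /andP[xv1 xs] /andP[v1s us].
case: v1 r01 ps xv1 v1s => [z|[B w']] r01 ps xv1 v1s /=.
  apply/andP; split; last by apply: (IH (inl z)) => //; left.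
  case: H0 => [E|[A [w [E xA]]]]; subst v0; first exact: r01.
  apply: (edge_adj esym xA r01).
  by apply: contra_neq xv1 => ->.
apply: (IH (inr (B, w'))) => //; right; exists B, w'; split => //.
case: H0 => [E|[A [w [E xA]]]]; subst v0; first exact: r01.
by move: r01 => /= /andP[/eqP <-].
Qed.

Lemma proj_sub s : subseq (map inl (proj s)) s.
Proof.
elim: s => [//|[x|a] s IH] /=; first by rewrite eqxx.
exact: subseq_trans IH (subseq_cons _ _).
Qed.

Variable K : nat.
Variable c : Vc e n -> 'I_K.

Lemma tree_rb : rainbow_coloring (rc e n) c -> rainbow_coloring e (fun x => c (inl x)).
Proof.
move=> rb; apply/forallP => u; apply/forallP => v.
have := forallP (forallP rb (inl u)) (inl v) => /existsP[l /existsP[t]].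
rewrite /rainbow_path => /and4P[pt lt ut ct].
have [q [Hp Hl Hu Hc]] : exists q, [/\ path e u q, last u q = v, uniq (u :: q) &
    uniq (map (fun x => c (inl x)) (behead (belast u q)))].
  move: pt lt ut ct; case/lastP: (tval t) => [|s z].
    by move=> _ /= /eqP [->] _ _; exists [::].
  rewrite last_rcons => pt /eqP zv ut ct; subst z.
  have pq : proj (rcons s (inl v)) = rcons (proj s) v.
    by rewrite /proj -cats1 pmap_cat /= cats1.
  exists (proj (rcons s (inl v))); rewrite pq; split.
  - rewrite -pq; apply: (proj_path pt); first by left.
      by move: ut; rewrite /= => /andP[].
    by move: ut; rewrite /= => /andP[].
  - by rewrite last_rcons.
  - by rewrite -pq -[u :: _]/(proj (inl u :: rcons s (inl v))); exact: (pmap_uniq (@getlK) ut).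
  - rewrite belast_rcons /=.
    move: ct; rewrite belast_rcons /= => ct.
    have E : map (fun x => c (inl x)) (proj s) = map c (map inl (proj s)) by rewrite -map_comp.
    rewrite E; apply: subseq_uniq ct.
    exact: map_subseq (proj_sub s).
have Hs : size q < #|T|.
  by have := max_card (mem (u :: q)); rewrite (card_uniqP Hu).
apply/existsP; exists (Ordinal Hs); apply/existsP; exists (in_tuple q).
by rewrite /rainbow_path Hp Hl eqxx Hu Hc.
Qed.

End Proj.


Lemma find_le (a : pred nat) N j : j < N -> a j -> find a (iota 0 N) <= j.
Proof.
move=> jN aj; rewrite leqNgt; apply/negP => H.
by have := before_find 0 H; rewrite nth_iota // add0n aj.
Qed.

Lemma find_ge (a : pred nat) N j : j <= N -> (forall i, i < j -> ~~ a i) -> j <= find a (iota 0 N).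
Proof.
move=> jN na; rewrite leqNgt; apply/negP => H.
have hs : has a (iota 0 N) by rewrite has_find size_iota (leq_trans H jN).
by have := nth_find 0 hs; rewrite nth_iota ?(leq_trans H jN) // add0n (negbTE (na _ H)).
Qed.

Lemma find_found (a : pred nat) N : find a (iota 0 N) < N -> a (find a (iota 0 N)).
Proof.
move=> H; have hs : has a (iota 0 N) by rewrite has_find size_iota.
by have := nth_find 0 hs; rewrite nth_iota // add0n.
Qed.

Lemma rp_ext (V : finType) (r : rel V) k (c1 c2 : V -> 'I_k) : c1 =1 c2 ->
  rainbow_coloring r c1 = rainbow_coloring r c2.
Proof.
move=> H; apply: eq_forallb => u; apply: eq_forallb => v; apply: eq_existsb => l.
apply: eq_existsb => t; by rewrite /rainbow_path (eq_map H).
Qed.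

Lemma loc_ext (V : finType) (r : rel V) k (c1 c2 : V -> 'I_k) : c1 =1 c2 ->
  locating r c1 = locating r c2.
Proof.
move=> H.
have cc : forall i, color_class c1 i = color_class c2 i.
  by move=> i; apply/setP => x; rewrite !inE H.
apply: eq_forallb => u; apply: eq_forallb => v; congr (_ ==> _).
by apply: eq_existsb => i; rewrite !cc.
Qed.

Unset Implicit Arguments.
Theorem lemma5 (m n : nat) (T : finType) (e : rel T) :
  2 <= m -> 2 <= n -> #|T| = m -> simple_graph e -> is_tree e ->
  maxn (rvc e) (n + 2) <= rvcl (corona_rel e (complete_rel n)) <= 2 * m + n - 2.
Proof.
move=> m2 n2 Tm [esym eirr] [econn eacyc]; subst m.
have [z0 [y0 ez0]] : exists z0 y0, e z0 y0.
  case/card_gt1P: m2 => u [v [_ _ uv]].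
  case/connectP: (econn u v) => p pp lp.
  case: p pp lp => [|z p] /=; first by move=> _ E; rewrite E eqxx in uv.
  by case/andP => euz _ _; exists u, z.
have [x [y [exy leaf]]] := leaf_exists esym eirr eacyc ez0.
change (maxn (rvc e) (n + 2) <= rvcl (rc e n) <= 2 * #|T| + n - 2).
set N := #|Vc e n|.
have NT : #|T| + n <= N.
  rewrite /N /Vc card_sum card_prod card_ord leq_add2l.
  have : 0 < #|{: edge_type e}| by apply/card_gt0P; exists (E exy).
  by case: #|{: edge_type e}| => // j _; rewrite mulSn leq_addr.
apply/andP; split.
  rewrite geq_max; apply/andP; split.
    rewrite /rvcl; set K := find _ _.
    have rvc_ub : rvc e <= #|T|.+1 by have := find_size (has_rvc e) (iota 0 #|T|.+1); rewrite size_iota; apply.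
    have [KN|KN] := ltnP K N.+1; last first.
      apply: leq_trans rvc_ub _; apply: leq_trans _ KN; rewrite ltnS.
      exact: leq_trans (leq_addr n #|T|) NT.
    case/existsP: (find_found KN) => c /andP[rb _].
    have rbT : has_rvc e K.
      apply/existsP; exists [ffun x => c (inl x)].
      rewrite (@rp_ext _ _ _ _ (fun x => c (inl x))); first exact: tree_rb.
      by move=> a; rewrite ffunE.
    have [KT|KT] := ltnP K #|T|.+1; first exact: find_le KT rbT.
    exact: leq_trans rvc_ub KT.
  rewrite addn2; apply: find_ge; first by move: NT m2; clear; lia.
  move=> i ilt; apply/negP => /existsP[c /andP[_ loc]].
  have := lower_k esym eirr exy leaf loc; by rewrite leqNgt ilt.
apply: leq_trans (_ : #|T| + n <= _); last by lia.
apply: find_le; first by rewrite ltnS.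
apply/existsP; exists [ffun v => col v]; apply/andP; split.
  rewrite (@rp_ext _ _ _ _ (@col T e n)); first exact: col_rainbow.
  by move=> a; rewrite ffunE.
rewrite (@loc_ext _ _ _ _ (@col T e n)); first exact: col_locating.
by move=> a; rewrite ffunE.
Qed.
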